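(* Let $(B,+,\cdot)$ be a finite simple left brace such that $(B,\cdot)$ is metabelian and all Sylow subgroups of $(B,\cdot)$ are abelian. If some Sylow subgroup of $(B,\cdot)$ is cyclic, then $|B|$ is a prime power; in fact $B$ is a cyclic trivial left brace.
   Context: A left brace is a set $B$ with two operations $+,\cdot$ such that $(B,+)$ is an abelian group, $(B,\cdot)$ is a group and $a(b+c)+a=ab+ac$ for all $a,b,c$; $\lambda_a(b)=ab-a$. A left ideal is a subgroup $L$ of $(B,+)$ with $\lambda_b(L)\subseteq L$ for all $b$; an ideal is a left ideal that is a normal subgroup of $(B,\cdot)$. $B$ is simple if $B\ne 0$ and its only ideals are $0$ and $B$. $B$ is trivial if $ab=a+b$ for all $a,b$; a cyclic trivial brace is one whose additive group is cyclic. A group is metabelian if its derived length is at most $2$. *)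

(* Defs.v *)
(* A finite left brace is represented by its multiplicative
   group (a finGroupType gT) together with an explicit additive structure
   (add, opp, zero) on the same carrier. *)
From HB Require Import structures.
From mathcomp Require Import all_boot all_fingroup all_solvable.
Set Implicit Arguments. Unset Strict Implicit. Unset Printing Implicit Defensive.
Local Open Scope group_scope.

Section Brace.
Variables (gT : finGroupType) (add : gT -> gT -> gT) (opp : gT -> gT) (zero : gT).

Definition is_abelian_group_add : Prop :=
  [/\ forall a b c, add a (add b c) = add (add a b) c,
      forall a b, add a b = add b a,
      forall a, add zero a = a
    & forall a, add (opp a) a = zero].

Definition is_left_brace : Prop :=
  is_abelian_group_add /\
  forall a b c, add (a * add b c) a = add (a * b) (a * c).

Definition lambda (a b : gT) : gT := add (a * b) (opp a).

Definition is_left_ideal (L : {set gT}) : Prop :=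
  [/\ zero \in L,
      {in L &, forall x y, add x y \in L},
      {in L, forall x, opp x \in L}
    & forall b, {in L, forall x, lambda b x \in L}].

Definition is_ideal (L : {set gT}) : Prop :=
  [/\ is_left_ideal L, group_set L & L <| [set: gT]].

Definition simple_brace : Prop :=
  [set zero] != [set: gT] /\
  forall L : {set gT}, is_ideal L -> L = [set zero] \/ L = [set: gT].

Definition trivial_brace : Prop := forall a b, a * b = add a b.

Definition additive_cyclic : Prop :=
  exists g : gT, forall x : gT, exists n : nat, x = iter n (add g) zero.

End Brace.

(* Main.v *)
Require Import Defs.
From HB Require Import structures.
From mathcomp Require Import all_boot all_fingroup all_solvable.
From mathcomp Require Import ssralg.
Set Implicit Arguments. Unset Strict Implicit. Unset Printing Implicit Defensive.
Local Open Scope group_scope.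

Lemma metab_cyclic_sylow (gT : finGroupType) (G P : {group gT}) p :
  G^`(2) = 1 -> p.-Sylow(G) P -> cyclic P ->
  P \subset G^`(1) \/ p^'.-group G^`(1).
Proof.
move=> dG2 sylP cycP.
have [-> | ntP] := eqVneq P 1%G; first by left; apply: sub1G.
set M := G^`(1).
have abM : abelian M by apply/derG1P.
have nMG : M <| G := der_normal 1 G.
have sPG : P \subset G := pHall_sub sylP.
have pP : p.-group P := pHall_pgroup sylP.
have abP := cyclic_abelian cycP.
set N := 'N_G(P).
have nPN : P <| N := normalSG sPG.
have sylPN : p.-Sylow(N) P := pHall_subl (normal_sub nPN) (subsetIl _ _) sylP.
have hallPN := pHall_Hall sylPN.
have [H] := splitsP (SchurZassenhaus_split hallPN nPN).
rewrite complgC => compH.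
have defN : P ><| H = N by apply/(sdprod_normal_complP nPN).
have coPH : coprime #|P| #|H| by rewrite (coprime_sdprod_Hall_l defN).
have [_ defPH nPH tiPH] := sdprodP defN.
have sHN : H \subset N by rewrite /N -defPH mulG_subr.
have sHG : H \subset G := subset_trans sHN (subsetIl _ _).
have [cPH | ncPH] := boolP (H \subset 'C(P)); last first.
  left.
  set K := [~: P, H].
  have sKP : K \subset P by rewrite commg_subl.
  have sKM : K \subset M by apply: commgSS.
  have nKH : H \subset 'N(K) := commg_normr _ _.
  have nKP : P \subset 'N(K) := commg_norml _ _.
  have solP := abelian_sol abP.
  have := coprime_quotient_cent sKP nKH coPH solP.
  have cPHK : P / K \subset 'C(H / K) := quotient_cents2r (subxx K).
  rewrite (setIidPl cPHK) => eqQ.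
  have sPCK : P \subset K * 'C_P(H).
    by rewrite -quotientSK // eqQ.
  have sCP : 'C_P(H) \subset P := subsetIl _ _.
  have pC : p.-group 'C_P(H) := pgroupS sCP pP.
  have pK : p.-group K := pgroupS sKP pP.
  have [a oK] := p_natP pK. have [b oC] := p_natP pC.
  have [ab | ba] := leqP a b.
    have : K \subset 'C_P(H).
      by rewrite -(cardSg_cyclic cycP) // oK oC dvdn_exp2l.
    move=> sKC; case/negP: ncPH; rewrite centsC.
    apply: subset_trans sPCK _.
    by rewrite mulG_subG (subset_trans sKC (subsetIr _ _)) subsetIr.
  have sCK : 'C_P(H) \subset K.
    by rewrite -(cardSg_cyclic cycP) // oK oC dvdn_exp2l // ltnW.
  apply: subset_trans sKM; apply: subset_trans sPCK _.
  by rewrite mulG_subG subxx sCK.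
right.
have nilM := abelian_nil abM.
have [_ defM _ _] := dprodP (nilpotent_pcoreC p nilM).
set Q := 'O_p(M) in defM; set R := 'O_p^'(M) in defM.
have nQG : Q <| G := char_normal_trans (pcore_char _ _) nMG.
have nRG : R <| G := char_normal_trans (pcore_char _ _) nMG.
have sQP : Q \subset P :=
  normal_sub_max_pgroup (Hall_max sylP) (pcore_pgroup _ _) nQG.
have pH : p^'.-group H.
  have coHP : coprime #|H| #|P| by rewrite coprime_sym.
  exact: (coprime_p'group coHP pP ntP).
have nRH : H \subset 'N(R) := subset_trans sHG (normal_norm nRG).
pose Y := (R <*> H)%G.
have defY : Y = R * H :> {set gT} := norm_joinEr nRH.
have pY : p^'.-group Y by rewrite /= defY pgroupM pcore_pgroup pH.
have nRP : P \subset 'N(R) := subset_trans sPG (normal_norm nRG).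
have nYP : P \subset 'N(Y) by rewrite /= defY normsM // cents_norm // centsC.
have nYH : H \subset 'N(Y) := subset_trans (joing_subr R H) (normG Y).
have nYR : R \subset 'N(Y) := subset_trans (joing_subl R H) (normG Y).
have nYQ : Q \subset 'N(Y).
  apply: cents_norm; rewrite /= defY centM subsetI.
  rewrite (subset_trans (pcore_sub _ _) (subset_trans abM (centS (pcore_sub _ _)))) /=.
  by rewrite (subset_trans sQP) // centsC.
have nYM : M \subset 'N(Y) by rewrite /M -defM mulG_subG nYQ nYR.
pose MP := (G^`(1) <*> P)%G.
have sMPG : MP \subset G by rewrite join_subG der_sub sPG.
have nMPG : MP <| G := sub_der1_normal (joing_subl _ _) sMPG.
have sylPMP : p.-Sylow(MP) P := pHall_subl (joing_subr _ _) sMPG sylP.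
have defG := Frattini_arg nMPG sylPMP.
have nYG : G \subset 'N(Y).
  by rewrite -defG mulG_subG join_subG nYM nYP /= -defPH mulG_subG nYP nYH.
pose Z := (Y <*> P)%G.
have sYZ : Y \subset Z := joing_subl _ _.
have sPZ : P \subset Z := joing_subr _ _.
have sGYP : G \subset Y * P.
  rewrite -norm_joinEr // -defG mulG_subG join_subG -defPH !mulG_subG sPZ /=.
  rewrite (subset_trans (joing_subr R H) sYZ) andbT.
  rewrite /M -defM mulG_subG (subset_trans sQP sPZ).
  by rewrite (subset_trans (joing_subl R H) sYZ).
have abGY : abelian (G / Y).
  apply: abelianS (quotientS Y sGYP) _.
  by rewrite quotientMidl quotient_abelian.
have sMY : M \subset Y := der1_min nYG abGY.
exact: pgroupS sMY pY.
Qed.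

Lemma sub_der1_sylow_normal (gT : finGroupType) (G P : {group gT}) p :
  G^`(2) = 1 -> p.-Sylow(G) P -> P \subset G^`(1) -> P <| G.
Proof.
move=> dG2 sylP sPM.
have abM : abelian G^`(1) by apply/derG1P.
have nPM : P <| G^`(1) by rewrite -sub_abelian_normal.
have pP : p.-group P := pHall_pgroup sylP.
have sPQ : P \subset 'O_p(G^`(1)) := pcore_max pP nPM.
have nQG : 'O_p(G^`(1)) <| G := char_normal_trans (pcore_char _ _) (der_normal 1 G).
have sQP : 'O_p(G^`(1)) \subset P :=
  normal_sub_max_pgroup (Hall_max sylP) (pcore_pgroup _ _) nQG.
suff -> : P :=: 'O_p(G^`(1)) by [].
by apply/eqP; rewrite eqEsubset sPQ sQP.
Qed.

Record abg := ABG {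
  abgT : finGroupType; abg_add : abgT -> abgT -> abgT; abg_opp : abgT -> abgT;
  abg_zero : abgT; abg_ax : is_abelian_group_add abg_add abg_opp abg_zero }.

Definition abgZ (A : abg) : Type := abgT A.
Definition abgG (A : abg) : Type := abgT A.

Section AbgInst.
Variable A : abg.
Let ax := abg_ax A.
Lemma abg_addA : associative (@abg_add A). Proof. by case: ax => h _ _ _ x y z; rewrite h. Qed.
Lemma abg_addC : commutative (@abg_add A). Proof. by case: ax. Qed.
Lemma abg_add0 : left_id (abg_zero A) (@abg_add A). Proof. by case: ax. Qed.
Lemma abg_addN : left_inverse (abg_zero A) (@abg_opp A) (@abg_add A). Proof. by case: ax. Qed.
End AbgInst.

HB.instance Definition _ A := Finite.on (abgG A).
HB.instance Definition _ A := Finite_isGroup.Build (abgG A) (@abg_addA A) (@abg_add0 A) (@abg_addN A).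
HB.instance Definition _ A := Choice.on (abgZ A).
HB.instance Definition _ A := GRing.isZmodule.Build (abgZ A) (@abg_addA A) (@abg_addC A) (@abg_add0 A) (@abg_addN A).


Section Brace.
Variables (gT : finGroupType) (add : gT -> gT -> gT) (opp : gT -> gT) (zero : gT).
Hypothesis Hb : is_left_brace add opp zero.
Let A := ABG (proj1 Hb).
Local Notation V := (abgZ A).
Local Notation lam := (lambda add opp).

Lemma addE (x y : gT) : add x y = ((x : V) + (y : V))%R. Proof. by []. Qed.
Lemma oppE (x : gT) : opp x = (- (x : V))%R. Proof. by []. Qed.
Lemma zeroE : zero = (0 : V)%R. Proof. by []. Qed.
Lemma lamE (a x : gT) : lam a x = ((((a * x)%g : gT) : V) - (a : V))%R. Proof. by []. Qed.

Lemma distr (a b c : gT) :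
  (((a * ((b : V) + (c : V))%R)%g : gT) : V) = ((((a * b)%g : gT) : V) + (((a * c)%g : gT) : V) - (a : V))%R.
Proof.
have := proj2 Hb a b c; rewrite !addE => <-.
by rewrite GRing.addrK.
Qed.

Lemma zero1 : zero = 1.
Proof.
have := proj2 Hb 1 zero zero; rewrite !mul1g !addE.
move/(congr1 (fun v => v - ((zero : V) + zero))%R).
by rewrite GRing.addrAC GRing.subrr GRing.add0r => ->.
Qed.


Lemma lam_add a x y : lam a (add x y) = add (lam a x) (lam a y).
Proof. by rewrite !lamE !addE distr [RHS]GRing.addrACA GRing.addrA. Qed.

Lemma lam_zero a : lam a zero = zero.
Proof. by rewrite lamE {1}zero1 mulg1 GRing.subrr. Qed.

Lemma lam_opp a x : lam a (opp x) = opp (lam a x).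
Proof.
have h := lam_add a x (opp x).
have e : add x (opp x) = zero by rewrite addE oppE zeroE GRing.subrr.
rewrite e lam_zero in h.
rewrite addE zeroE in h.
by rewrite oppE; apply: (GRing.addrI (lam a x : V)); rewrite GRing.subrr -h.
Qed.

Lemma mul_lam a b : a * b = add a (lam a b).
Proof. by rewrite lamE addE GRing.addrC GRing.subrK. Qed.

Lemma lam1 x : lam 1 x = x.
Proof. by rewrite lamE mul1g -zero1 zeroE GRing.subr0. Qed.

Lemma lamM a b x : lam (a * b) x = lam a (lam b x).
Proof.
rewrite [lam b x]/lambda lam_add lam_opp !addE !oppE !lamE mulgA.
by rewrite GRing.opprB GRing.addrA GRing.subrK.
Qed.

Lemma lam_inj a : injective (lam a).
Proof.
move=> x y; rewrite !lamE => h.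
by apply: (mulgI a); apply: (@GRing.addIr V (- (a : V))%R); exact: h.
Qed.

Local Notation G := (abgG A).

Lemma lam_expg a (x : G) n : ((lam a x : G) ^+ n) = (lam a (x ^+ n) : G).
Proof.
elim: n => [|n IH]; first by rewrite !expg0; symmetry; apply: lam_zero.
by rewrite !expgS IH; symmetry; apply: lam_add.
Qed.

Lemma lam_pelt pi a (x : G) : pi.-elt x -> pi.-elt (lam a x : G).
Proof.
move=> px; apply: pnat_dvd px; rewrite order_dvdn lam_expg expg_order.
by apply/eqP; apply: lam_zero.
Qed.

Lemma abG : abelian [set: G].
Proof. by apply/centsP => x _ y _; apply: abg_addC. Qed.

Lemma normal_Hall_left_ideal pi (H : {group gT}) :
  pi.-Hall([set: gT]) H -> H <| [set: gT] -> is_left_ideal add opp zero H.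
Proof.
move=> hallH nH.
pose S := 'O_pi([set: G]).
have hallS : pi.-Hall([set: G]) S := nilpotent_pcore_Hall pi (abelian_nil abG).
have nS : S <| [set: G] := pcore_normal _ _.
have memS (x : G) : (x \in S) = pi.-elt x by rewrite (mem_normal_Hall hallS nS) ?inE.
pose L := [set x : gT | (x : G) \in S].
have gL : group_set L.
  apply/group_setP; split; first by rewrite inE -zero1; exact: group1.
  move=> x y; rewrite !inE => Sx Sy; rewrite mul_lam.
  apply: (@groupM _ S x (lam x y : G)) => //.
  by rewrite memS lam_pelt // -memS.
pose Lg := Group gL.
have cardL : #|L| = #|S| by rewrite cardsE.
have cardS : #|S| = (#|gT|`_pi)%N by rewrite (card_Hall hallS) cardsT.
have piL : pi.-group Lg by rewrite /pgroup /= cardL cardS part_pnat.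
have sLH : Lg \subset H by rewrite (sub_normal_Hall hallH nH) ?subsetT.
have eqLH : L = H.
  by apply/eqP; rewrite eqEcard sLH (card_Hall hallH) cardsT /= cardL cardS.
rewrite -eqLH; split.
- by rewrite inE; exact: group1.
- by move=> x y; rewrite !inE => Sx Sy; apply: (@groupM _ S x y).
- by move=> x; rewrite !inE => Sx; rewrite -[opp x]/((x : G)^-1) groupV.
- by move=> b x; rewrite !inE => Sx; rewrite memS lam_pelt // -memS.
Qed.


Definition lact (x a : gT) : gT := lam a^-1 x.
Lemma lact_is_action : is_action [set: gT] lact.
Proof.
split; first by move=> a x y; apply: lam_inj.
by move=> x a b _ _; rewrite /lact invMg lamM.
Qed.
Definition lactA := Action lact_is_action.

End Brace.

Local Close Scope group_scope.

Theorem mainTheorem5 (gT : finGroupType) (add : gT -> gT -> gT)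
  (opp : gT -> gT) (zero : gT) :
  is_left_brace add opp zero ->
  simple_brace add opp zero ->
  (* (B,.) is metabelian: derived length at most 2 *)
  (([set: gT] : {set gT})^`(2) = 1)%g ->
  (* all Sylow subgroups of (B,.) are abelian *)
  (forall (p : nat) (P : {group gT}), (p.-Sylow([set: gT]) P)%g -> abelian P) ->
  (* some (nontrivial) Sylow subgroup of (B,.) is cyclic *)
  (exists (p : nat) (P : {group gT}),
      [/\ prime p, p %| #|gT| , (p.-Sylow([set: gT]) P)%g & cyclic P]) ->
  (exists p k : nat, prime p /\ #|gT| = p ^ k) /\
  trivial_brace add /\ additive_cyclic add zero.
Proof.
move=> Hb [hne hsimp] dG2 _ [p [P [pr_p p_dv sylP cycP]]].
have z1 := zero1 Hb.
have simpH (H : {group gT}) pi : (pi.-Hall([set: gT]) H)%g -> (H <| [set: gT])%g ->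
    H :=: [set zero] \/ H :=: [set: gT].
  move=> hH nH; apply: hsimp; split => //; last exact: groupP.
  exact: normal_Hall_left_ideal hH nH.
have gt0 : 0 < #|gT| by rewrite -cardsT cardG_gt0.
have cardP1 : 1 < #|P|.
  by rewrite (card_Hall sylP) cardsT p_part_gt1 mem_primes pr_p gt0 p_dv.
have pG : (p.-group [set: gT])%g.
  have dG2' : (([set: gT]%G : {group gT})^`(2) = 1)%g by [].
  case: (metab_cyclic_sylow dG2' sylP cycP) => [sPM | pM].
    have nPG := sub_der1_sylow_normal dG2' sylP sPM.
    case: (simpH P p sylP nPG) => eqP1.
      by move: cardP1; rewrite eqP1 cards1.
    by rewrite -eqP1; exact: pHall_pgroup sylP.
  have solG : solvable [set: gT] by apply/derivedP; exists 2.
  have [K hallK] := Hall_exists p^' solG.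
  have sMK := normal_sub_max_pgroup (Hall_max hallK) pM (der_normal 1 _).
  have nKG := sub_der1_normal sMK (subsetT K).
  case: (simpH K _ hallK nKG) => eqK.
    have eI : #|[set: gT] : K|%g = #|[set: gT]|.
      by have := Lagrange (subsetT K); rewrite eqK cards1 mul1n.
    by case/and3P: hallK => _ _; rewrite pnatNK /pgroup eI.
  by have := pHall_pgroup hallK; rewrite eqK /pgroup cardsT p'natE // p_dv.
have eqPG : P :=: [set: gT].
  apply/eqP; rewrite eqEcard subsetT /= (card_Hall sylP). rewrite (part_pnat_id pG). done.
have cycG : cyclic [set: gT] by rewrite -eqPG.
have abT : abelian [set: gT] := cyclic_abelian cycG.
pose F := [set x : gT | [forall a, lambda add opp a x == x]].
have idF : is_ideal add opp zero F.
  split.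
  - split.
    + by rewrite inE; apply/forallP => a; rewrite (lam_zero Hb).
    + move=> x y; rewrite !inE => /forallP Fx /forallP Fy; apply/forallP => a.
      by rewrite (lam_add Hb) (eqP (Fx a)) (eqP (Fy a)).
    + move=> x; rewrite !inE => /forallP Fx; apply/forallP => a.
      by rewrite (lam_opp Hb) (eqP (Fx a)).
    + by move=> b x; rewrite !inE => /forallP Fx; rewrite (eqP (Fx b)); apply/forallP.
  - apply/group_setP; split.
    + by rewrite inE; apply/forallP => a; rewrite -z1 (lam_zero Hb).
    + move=> x y; rewrite !inE => /forallP Fx /forallP Fy.
      rewrite (mul_lam Hb) (eqP (Fy x)); apply/forallP => a.
      by rewrite (lam_add Hb) (eqP (Fx a)) (eqP (Fy a)).
  - by rewrite -sub_abelian_normal ?subsetT.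
have triv : trivial_brace add.
  case: (hsimp F idF) => eqF; last first.
    move=> a b; rewrite (mul_lam Hb).
    have : b \in F by rewrite eqF inE.
    by rewrite inE => /forallP /(_ a) /eqP ->.
  exfalso.
  pose to := lactA Hb.
  have actsT : ([acts [set: gT], on [set: gT] | to])%g.
    by apply/subsetP => a _; rewrite !inE; apply/subsetP => x _; rewrite !inE.
  have hmod := pgroup_fix_mod pG actsT.
  set X := ('Fix_([set: gT] | to)([set: gT]))%g in hmod.
  have sXF : X \subset F.
    apply/subsetP => x; rewrite inE => /andP [_ /afixP h]; rewrite inE.
    apply/forallP => a; have := h (a^-1)%g (in_setT _).
    by rewrite /= /lact invgK => ->.
  have X1 : (1 \in X)%g.
    rewrite inE in_setT /=; apply/afixP => a _.
    by rewrite /= /lact -z1 (lam_zero Hb).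
  have : p %| #|X|.
    by rewrite /dvdn -hmod cardsT.
  have X0 : 0 < #|X| by apply/card_gt0P; exists 1%g.
  move/(dvdn_leq X0) => pX.
  have := subset_leq_card sXF; rewrite eqF cards1 => X1'.
  by have := prime_gt1 pr_p; rewrite ltnNge (leq_trans pX X1').
have [k ek] := p_natP pG.
split; first by exists p, k; rewrite -cardsT ek.
split => //.
have [g eg] := cyclicP cycG.
exists g => x.
have : (x \in <[g]>)%g by rewrite -eg inE.
case/cycleP => i ->; exists i.
elim: i => [|i IH] /=; first by rewrite expg0 z1.
by rewrite -IH -triv expgS.
Qed.
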